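(* Let $\mathbb S^1=\{z\in\mathbb C:|z|=1\}$, let $f:\mathbb S^1\to\mathbb S^1$ be $f(z)=z^2$, let $\rho(z)=e^{i\alpha}z$ with $\alpha/2\pi$ irrational, and let $g=\rho\circ f$. If $d$ is any metric on $\mathbb S^1$ inducing the standard topology of $\mathbb S^1$, then $\mathrm{Lip}(f,d)>1$ and $\mathrm{Lip}(g,d)>1$.
   Context: For a self-map $f$ of a metric space $(\mathbb X,d)$, $\mathrm{Lip}(f,d)=\sup_{x\neq y} d(f(x),f(y))/d(x,y)$. *)

(* Defs.v *)
From Stdlib Require Import Reals QArith.
From Coquelicot Require Import Coquelicot.
Open Scope R_scope.

Definition S1 (z : C) : Prop := Cmod z = 1.

Definition is_metric_on (A : C -> Prop) (d : C -> C -> R) : Prop :=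
  (forall x y, A x -> A y -> 0 <= d x y) /\
  (forall x y, A x -> A y -> (d x y = 0 <-> x = y)) /\
  (forall x y, A x -> A y -> d x y = d y x) /\
  (forall x y z, A x -> A y -> A z -> d x z <= d x y + d y z).

Definition d_open (A : C -> Prop) (d : C -> C -> R) (U : C -> Prop) : Prop :=
  forall x, U x -> exists eps, 0 < eps /\
    forall y, A y -> d x y < eps -> U y.

Definition std_open (A : C -> Prop) (U : C -> Prop) : Prop :=
  forall x, U x -> exists eps, 0 < eps /\
    forall y, A y -> Cmod (Cminus y x) < eps -> U y.

Definition induces_std_topology (A : C -> Prop) (d : C -> C -> R) : Prop :=
  forall U : C -> Prop, (forall x, U x -> A x) ->
    (d_open A d U <-> std_open A U).

Definition Lip_on (A : C -> Prop) (f : C -> C) (d : C -> C -> R) : Rbar :=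
  Lub_Rbar (fun r => exists x y, A x /\ A y /\ x <> y /\
                                 r = d (f x) (f y) / d x y).

Definition sqmap (z : C) : C := Cmult z z.
Definition rot (alpha : R) (z : C) : C := Cmult (cos alpha, sin alpha) z.
Definition gmap (alpha : R) (z : C) : C := rot alpha (sqmap z).

Definition irrational (x : R) : Prop := forall q : Q, x <> Q2R q.

(* Main.v *)
Require Import Defs.
From Stdlib Require Import Reals QArith Lra Lia Classical.
From Coquelicot Require Import Coquelicot.
Open Scope R_scope.

Definition tn (n : nat) : R := PI * (/2) ^ n.
Definition zn (n : nat) : C := (cos (tn n), sin (tn n)).

Lemma tn_S n : tn n = 2 * tn (S n).
Proof. unfold tn; simpl; field. Qed.

Lemma tn_pos n : 0 < tn n.
Proof. unfold tn. apply Rmult_lt_0_compat. apply PI_RGT_0. apply pow_lt; lra. Qed.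

Lemma zn_sq n : Cmult (zn (S n)) (zn (S n)) = zn n.
Proof.
  unfold zn. rewrite (tn_S n). rewrite cos_2a, sin_2a.
  apply injective_projections; simpl; ring.
Qed.

Lemma cs_mod t : Cmod (cos t, sin t) = 1.
Proof.
  unfold Cmod; simpl. pose proof (sin2_cos2 t). unfold Rsqr in H.
  replace (cos t * (cos t * 1) + sin t * (sin t * 1)) with 1 by lra. apply sqrt_1.
Qed.

Lemma Cminus_fact p z : Cminus (Cmult p z) p = Cmult p (Cminus z (1,0)).
Proof. destruct p, z. apply injective_projections; simpl; ring. Qed.

Lemma zn_close t : 0 < t -> t <= PI / 2 -> Cmod (Cminus (cos t, sin t) (1,0)) < 2 * t.
Proof.
  intros H1 H2.
  pose proof PI_RGT_0.
  assert (Hc : 0 <= cos t) by (apply cos_ge_0; lra).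
  assert (Hs : 0 <= sin t) by (apply sin_ge_0; lra).
  assert (Hst : sin t < t) by (apply sin_lt_x; lra).
  pose proof (COS_bound t). pose proof (sin2_cos2 t). unfold Rsqr in *.
  unfold Cmod; simpl.
  rewrite <- (sqrt_pow2 (2 * t)) by lra.
  apply sqrt_lt_1_alt. split.
  - nra.
  - nra.
Qed.

Lemma key (h : C -> C) (p : C) (d : C -> C -> R) :
  is_metric_on S1 d -> induces_std_topology S1 d -> S1 p -> h p = p ->
  (forall w, h (Cmult p w) = Cmult p (Cmult w w)) ->
  Rbar_lt (Finite 1) (Lip_on S1 h d).
Proof.
  intros [Hpos [Hzero [Hsym Htri]]] Htop Sp Hp Hw.
  apply NNPP; intro Hn.
  apply Rbar_not_lt_le in Hn.
  assert (Hs1 : forall x, S1 x -> S1 (h x) -> True) by auto.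
  assert (Smul : forall t, S1 (Cmult p (cos t, sin t))).
  { intro t. unfold S1. rewrite Cmod_mult, cs_mod. unfold S1 in Sp. lra. }
  assert (NE : forall x y, S1 x -> S1 y -> S1 (h x) -> S1 (h y) ->
                  d (h x) (h y) <= d x y).
  { intros x y Sx Sy Shx Shy.
    destruct (classic (x = y)) as [<-|Hxy].
    - rewrite (proj2 (Hzero _ _ Shx Shx) eq_refl), (proj2 (Hzero _ _ Sx Sx) eq_refl). lra.
    - assert (Hd : 0 < d x y).
      { destruct (Hpos x y Sx Sy) as [Hlt|Heq]; auto.
        exfalso; apply Hxy; apply (Hzero x y Sx Sy); auto. }
      assert (Hle : Rbar_le (d (h x) (h y) / d x y) 1).
      { eapply Rbar_le_trans; [|exact Hn].
        destruct (Lub_Rbar_correct (fun r => exists x y, S1 x /\ S1 y /\ x <> y /\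
                                 r = d (h x) (h y) / d x y)) as [Hub _].
        apply Hub. exists x, y; auto. }
      simpl in Hle.
      apply (Rmult_le_compat_r (d x y)) in Hle; [|lra].
      unfold Rdiv in Hle. rewrite Rmult_assoc, Rinv_l in Hle; lra. }
  set (c := d p (Cmult p (zn 0))).
  assert (Hc : 0 < c).
  { unfold c. destruct (Hpos p (Cmult p (zn 0)) Sp (Smul _)) as [H|H]; auto.
    exfalso. symmetry in H. apply (Hzero _ _ Sp (Smul _)) in H.
    unfold zn, tn in H. simpl in H. rewrite Rmult_1_r, cos_PI, sin_PI in H.
    destruct p as [a b]. unfold S1, Cmod in *. simpl in *.
    injection H; intros H1 H2.
    assert (a = 0) by lra. assert (b = 0) by lra. subst.
    replace (0 * (0 * 1) + 0 * (0 * 1)) with 0 in Sp by ring. rewrite sqrt_0 in Sp. lra. }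
  assert (Hind : forall n, c <= d p (Cmult p (zn n))).
  { induction n. - unfold c; lra.
    - eapply Rle_trans; [exact IHn|].
      rewrite <- zn_sq, <- Hw.
      rewrite <- Hp at 1.
      apply NE; auto. apply Smul. rewrite Hp; auto. rewrite Hw, zn_sq. apply Smul. }
  set (U := fun y => S1 y /\ d p y < c).
  assert (Uo : d_open S1 d U).
  { intros y [Sy Hy]. exists (c - d p y). split; [lra|].
    intros y' Sy' Hyy. split; auto. pose proof (Htri p y y' Sp Sy Sy'). lra. }
  apply Htop in Uo; [|intros x [Hx _]; auto].
  destruct (Uo p) as [eps [Heps HU]].
  { split; auto. rewrite (proj2 (Hzero p p Sp Sp) eq_refl). lra. }
  destruct (pow_lt_1_zero (/2) ltac:(rewrite Rabs_pos_eq; lra) (eps / (2 * PI)))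
    as [N HN].
  { pose proof PI_RGT_0. apply Rdiv_lt_0_compat; lra. }
  specialize (HN (S N) ltac:(lia)).
  rewrite Rabs_pos_eq in HN by (apply pow_le; lra).
  assert (Ht : tn (S N) <= PI / 2).
  { unfold tn. simpl. pose proof PI_RGT_0. assert ((/2)^N <= 1).
    { clear. induction N; simpl; [lra|]. assert (0 <= (/2)^N) by (apply pow_le; lra). nra. } nra. }
  assert (Hclose : Cmod (Cminus (Cmult p (zn (S N))) p) < eps).
  { rewrite Cminus_fact, Cmod_mult. unfold S1 in Sp. rewrite Sp, Rmult_1_l.
    eapply Rlt_le_trans. apply zn_close. apply tn_pos. auto.
    unfold tn. pose proof PI_RGT_0.
    apply (Rmult_lt_compat_l (2*PI)) in HN; [|lra].
    replace (2 * PI * (eps / (2 * PI))) with eps in HN by (field; lra).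
    simpl in HN |- *. lra. }
  destruct (HU _ (Smul _) Hclose) as [_ Hlt].
  specialize (Hind (S N)). unfold zn in Hind. lra.
Qed.

Theorem mainTheorem1 (alpha : R) (d : C -> C -> R) :
  irrational (alpha / (2 * PI)) ->
  is_metric_on S1 d ->
  induces_std_topology S1 d ->
  Rbar_lt (Finite 1) (Lip_on S1 sqmap d) /\
  Rbar_lt (Finite 1) (Lip_on S1 (gmap alpha) d).
Proof.
  intros _ Hm Ht. split.
  - apply (key sqmap (1,0) d Hm Ht).
    + unfold S1, Cmod; simpl. replace (1 * (1 * 1) + 0 * (0 * 1)) with 1 by ring. apply sqrt_1.
    + unfold sqmap; apply injective_projections; simpl; ring.
    + intro w; destruct w; unfold sqmap; apply injective_projections; simpl; ring.
  - pose proof (sin2_cos2 alpha) as Hsc. unfold Rsqr in Hsc.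
    assert (Hep : Cmult (cos alpha, sin alpha) (cos alpha, - sin alpha) = (1,0)).
    { apply injective_projections; simpl; ring_simplify; lra. }
    assert (H1 : forall z, Cmult (1,0) z = z).
    { intros [a b]; apply injective_projections; simpl; ring. }
    apply (key (gmap alpha) (cos alpha, - sin alpha) d Hm Ht).
    + unfold S1, Cmod; simpl. replace (cos alpha * (cos alpha * 1) + - sin alpha * (- sin alpha * 1)) with 1 by lra. apply sqrt_1.
    + unfold gmap, rot, sqmap. rewrite Cmult_assoc, Hep. apply H1.
    + intro w. unfold gmap, rot, sqmap.
      rewrite <- (Cmult_assoc (cos alpha, - sin alpha) w).
      rewrite (Cmult_assoc w (cos alpha, - sin alpha) w).
      rewrite (Cmult_comm w (cos alpha, - sin alpha)).
      rewrite <- (Cmult_assoc (cos alpha, - sin alpha) w w).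
      rewrite !Cmult_assoc, Hep, H1. reflexivity.
Qed.
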